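(* Let $V$ be a finite set and for each $v\in V$ let $P_v(x)$ be a Bernstein polynomial in $n$ variables. Fix a domain $S\subseteq[0,1]^n$. If $\sum_{v\in V}P_v(x)>0$ for all $x\in S$, then there exists a Bernoulli factory with output set $V$ which terminates almost surely on $S$ and, for every $x\in S$, outputs $v$ with probability $P_v(x)/\sum_{v'\in V}P_{v'}(x)$.
   Context: A Bernstein monomial is $\prod_{i=1}^n x_i^{a_i}(1-x_i)^{b_i}$ with nonnegative integers $a_i,b_i$; a Bernstein polynomial is a finite combination $\sum_j c_jM_j(x)$ of Bernstein monomials with positive coefficients $c_j$. A Bernoulli factory with output set $V$ (for inputs $x\in[0,1]^n$) is a (possibly infinite) rooted binary tree whose internal nodes are labeled by an index $i\in[n]$ or a known constant $c\in(0,1)$ and whose leaves are labeled by elements of $V$; on input $x$ one walks from the root, at a node labeled $i$ flipping a fresh independent coin that is $1$ with probability $x_i$, at a node labeled $c$ a fresh coin of bias $c$, following the edge labeled by the outcome, and outputs the label of the leaf reached; $\mathcal{F}(x)$ is the output ($\emptyset$ if no leaf is reached). It terminates almost surely on $S$ if $\Pr[\mathcal{F}(x)=\emptyset]=0$ for all $x\in S$. *)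

(* Defs.v *)
From HB Require Import structures.
From mathcomp Require Import all_boot all_order all_algebra.
From mathcomp Require Import all_classical all_reals all_analysis.
Set Implicit Arguments. Unset Strict Implicit. Unset Printing Implicit Defensive.
Import Order.TTheory GRing.Theory Num.Theory.
Import numFieldNormedType.Exports.
Local Open Scope classical_set_scope.
Local Open Scope ring_scope.

Section Bernoulli.
Variable R : realType.

Definition bern_monomial (n : nat) (a b : 'I_n -> nat) (x : 'I_n -> R) : R :=
  \prod_(i < n) (x i ^+ a i * (1 - x i) ^+ b i).

(** P is a Bernstein polynomial: a finite combination, with positive
    coefficients, of Bernstein monomials (the empty combination, i.e. the zero
    polynomial, is allowed). *)
Definition is_bernstein (n : nat) (P : ('I_n -> R) -> R) : Prop :=
  exists s : seq (R * ('I_n -> nat) * ('I_n -> nat)),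
    (forall t, t \in s -> 0 < t.1.1) /\
    (forall x, P x = \sum_(t <- s) t.1.1 * bern_monomial t.1.2 t.2 x).

Inductive bf_node (n : nat) (V : Type) : Type :=
| CoinX of 'I_n      (* flip a coin of bias x_i *)
| CoinC of R         (* flip a coin of known bias c *)
| Leaf of V.

(** A (possibly infinite) rooted binary tree is given by the label of the
    node at each address; the address of a node is the sequence of coin
    outcomes (edge labels) on the path from the root, the child of address
    p along outcome b being rcons p b.  Only nodes all of whose strict
    ancestors are internal are actually part of the tree. *)
Definition bf_tree (n : nat) (V : Type) := seq bool -> bf_node n V.

Definition bf_wf (n : nat) (V : Type) (t : bf_tree n V) : Prop :=
  forall p c, t p = CoinC _ _ c -> 0 < c < 1.

Definition edge_prob (n : nat) (V : Type) (x : 'I_n -> R) (nd : bf_node n V)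
  (b : bool) : R :=
  match nd with
  | CoinX i => if b then x i else 1 - x i
  | CoinC c => if b then c else 1 - c
  | Leaf _ => 0
  end.

(** Probability that the walk on input x visits address p
    (zero if the path passes through a leaf). *)
Definition path_prob (n : nat) (V : Type) (t : bf_tree n V) (x : 'I_n -> R)
  (p : seq bool) : R :=
  \prod_(j < size p) edge_prob x (t (take j p)) (nth false p j).

Definition is_leaf_with (n : nat) (V : eqType) (nd : bf_node n V) (v : V) : bool :=
  if nd is Leaf w then w == v else false.

Definition out_prob_upto (n : nat) (V : eqType) (t : bf_tree n V)
  (x : 'I_n -> R) (v : V) (N : nat) : R :=
  \sum_(k < N) \sum_(p : k.-tuple bool)
     (if is_leaf_with (t p) v then path_prob t x p else 0).

Definition outputs_with_prob (n : nat) (V : eqType) (t : bf_tree n V)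
  (x : 'I_n -> R) (v : V) (q : R) : Prop :=
  out_prob_upto t x v @ \oo --> q.

Definition halt_prob_upto (n : nat) (V : Type) (t : bf_tree n V)
  (x : 'I_n -> R) (N : nat) : R :=
  \sum_(k < N) \sum_(p : k.-tuple bool)
     (if t p is Leaf _ then path_prob t x p else 0).

Definition terminates_as_on (n : nat) (V : Type) (t : bf_tree n V)
  (S : set ('I_n -> R)) : Prop :=
  forall x, S x -> (fun N => 1 - halt_prob_upto t x N) @ \oo --> (0 : R).

End Bernoulli.

(* Main.v *)
Require Import Defs.
From HB Require Import structures.
From mathcomp Require Import all_boot all_order all_algebra.
From mathcomp Require Import all_classical all_reals all_analysis.
From mathcomp Require Import ring lra.
Import Order.TTheory GRing.Theory Num.Theory.
Import numFieldNormedType.Exports.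
Local Open Scope classical_set_scope.
Local Open Scope ring_scope.
Set Implicit Arguments. Unset Strict Implicit. Unset Printing Implicit Defensive.
Section Generic.
Variables (R : realType) (n : nat) (V : eqType).
Implicit Types (t : bf_tree R n V) (x : 'I_n -> R).

Definition subt t (b : bool) : bf_tree R n V := fun p => t (b :: p).

Lemma path_prob_cons t x b p :
  path_prob t x (b :: p) = edge_prob x (t [::]) b * path_prob (subt t b) x p.
Proof. by rewrite /path_prob /= big_ord_recl /=. Qed.

Lemma sum_tupleS k (F : k.+1.-tuple bool -> R) :
  \sum_(p : k.+1.-tuple bool) F p =
  \sum_(b : bool) \sum_(p : k.-tuple bool) F [tuple of b :: p].
Proof.
rewrite pair_big /=.
rewrite (reindex (fun bp : bool * k.-tuple bool => [tuple of bp.1 :: bp.2])) //=.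
exists (fun p : k.+1.-tuple bool => (thead p, [tuple of behead p])).
- move=> [b p] _ /=; rewrite theadE; congr pair; exact: val_inj.
- by move=> p _ /=; rewrite -tuple_eta.
Qed.

Lemma sum_tuple0 (F : 0.-tuple bool -> R) :
  \sum_(p : 0.-tuple bool) F p = F [tuple].
Proof.
rewrite (eq_bigr (fun _ => F [tuple])); last by move=> p _; rewrite tuple0.
by rewrite sumr_const card_tuple expn0 mulr1n.
Qed.

Definition leafv (nd : bf_node R n V) (v : V) : R :=
  if is_leaf_with nd v then 1 else 0.

Lemma out_S t x v N :
  out_prob_upto t x v N.+1 = leafv (t [::]) v
   + edge_prob x (t [::]) true * out_prob_upto (subt t true) x v N
   + edge_prob x (t [::]) false * out_prob_upto (subt t false) x v N.
Proof.
rewrite /out_prob_upto big_ord_recl /= sum_tuple0 /=.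
rewrite /path_prob big_ord0 /leafv -addrA; congr (_ + _).
rewrite !mulr_sumr -big_split /=; apply: eq_bigr => i _.
rewrite sum_tupleS big_bool /= !mulr_sumr.
congr (_ + _); apply: eq_bigr => p _;
  rewrite -/(path_prob t x (_ :: _)) path_prob_cons;
  by case: ifP; rewrite ?mulr0.
Qed.

End Generic.
Section Generic2.
Variables (R : realType) (n : nat) (V : eqType) (x : 'I_n -> R) (v : V).
Implicit Types (t : bf_tree R n V).

Definition goodt t := forall p,
  [/\ 0 <= edge_prob x (t p) true, 0 <= edge_prob x (t p) false &
      edge_prob x (t p) true + edge_prob x (t p) false <= 1].

Lemma goodt_sub t b : goodt t -> goodt (subt t b).
Proof. by move=> g p; exact: g. Qed.

Lemma leafv_ge0 (nd : bf_node R n V) : 0 <= leafv nd v.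
Proof. by rewrite /leafv; case: ifP. Qed.

Lemma out_bounds N : forall t, goodt t ->
  0 <= out_prob_upto t x v N <= 1.
Proof.
elim: N => [|N IH] t g.
  by rewrite /out_prob_upto big_ord0 lexx ler01.
rewrite out_S.
have /andP[a0 a1] := IH _ (goodt_sub true g).
have /andP[b0 b1] := IH _ (goodt_sub false g).
have [e1 e2 e12] := g [::].
case E: (t [::]) => [i|c|w].
- rewrite E /= in e1 e2 e12 *; rewrite /leafv /= add0r.
  apply/andP; split; first by rewrite addr_ge0 // mulr_ge0.
  apply: le_trans e12; apply: lerD; rewrite -[X in _ <= X]mulr1; exact: ler_wpM2l.
- rewrite E /= in e1 e2 e12 *; rewrite /leafv /= add0r.
  apply/andP; split; first by rewrite addr_ge0 // mulr_ge0.
  apply: le_trans e12; apply: lerD; rewrite -[X in _ <= X]mulr1; exact: ler_wpM2l.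
- rewrite /= !mul0r !addr0 /leafv /=; by case: ifP; rewrite ?lexx ?ler01.
Qed.

Lemma out_mono N : forall t, goodt t ->
  out_prob_upto t x v N <= out_prob_upto t x v N.+1.
Proof.
elim: N => [|N IH] t g.
  by have /andP[] := out_bounds 1 g; rewrite /out_prob_upto big_ord0.
rewrite (out_S t x v N) (out_S t x v N.+1).
have [e1 e2 _] := g [::].
rewrite -!addrA; apply: lerD => //; apply: lerD; apply: ler_wpM2l => //;
  exact: IH (goodt_sub _ g).
Qed.

Definition Lim t := sup (range (out_prob_upto t x v)).

Lemma out_cvg t : goodt t -> out_prob_upto t x v @ \oo --> Lim t.
Proof.
move=> g; apply: nondecreasing_cvgn.
  by apply/nondecreasing_seqP => N; exact: out_mono.
by exists 1 => _ [N _ <-]; have /andP[] := out_bounds N g.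
Qed.

Lemma Lim_eq t : goodt t ->
  Lim t = leafv (t [::]) v + edge_prob x (t [::]) true * Lim (subt t true)
        + edge_prob x (t [::]) false * Lim (subt t false).
Proof.
move=> g.
have H1 : (fun N => out_prob_upto t x v N.+1) @ \oo --> Lim t.
  by rewrite (cvg_shiftS (out_prob_upto t x v)); exact: out_cvg.
have H2 : (fun N => out_prob_upto t x v N.+1) @ \oo -->
   leafv (t [::]) v + edge_prob x (t [::]) true * Lim (subt t true)
        + edge_prob x (t [::]) false * Lim (subt t false).
  under eq_cvg do rewrite out_S.
  apply: cvgD; [apply: cvgD|]; first exact: cvg_cst.
  + by apply: cvgMl_tmp; exact: out_cvg (goodt_sub _ g).
  + by apply: cvgMl_tmp; exact: out_cvg (goodt_sub _ g).
exact: norm_cvg_unique H1 H2.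
Qed.

End Generic2.
Lemma halt_sum (R : realType) (n : nat) (V : finType) (t : bf_tree R n V) x N :
  halt_prob_upto t x N = \sum_(v : V) out_prob_upto t x v N.
Proof.
rewrite /halt_prob_upto /out_prob_upto exchange_big; apply: eq_bigr => k _.
rewrite exchange_big; apply: eq_bigr => p _.
case: (t p) => [i|c|w] /=; try by rewrite big1.
rewrite -big_mkcond /= (big_pred1 w) // => u; by rewrite eq_sym.
Qed.

Lemma wf_good (R : realType) (n : nat) (V : eqType) (t : bf_tree R n V) x :
  bf_wf t -> (forall i, 0 <= x i <= 1) -> goodt x t.
Proof.
move=> wf cx p; case E: (t p) => [i|c|w] /=.
- by have /andP[h1 h2] := cx i; split; lra.
- by have /andP[h1 h2] := wf _ _ E; split; lra.
- by split; lra.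
Qed.

Lemma iter_mulr (R : realType) (y : R) k : iter k (GRing.mul y) 1 = y ^+ k.
Proof. by elim: k => [|k IH] //=; rewrite IH exprS. Qed.

Section Auto.
Variables (R : realType) (n : nat) (V : finType).
Definition elt := (V * R * ('I_n -> nat) * ('I_n -> nat))%type.
Variable L0 : seq elt.

Definition tests (e : elt) : seq ('I_n * bool) :=
  flatten [seq nseq (e.1.2 i) (i, true) ++ nseq (e.2 i) (i, false)
          | i <- index_enum 'I_n].

Inductive st := Sel of seq elt | Tst of V & seq ('I_n * bool).

Definition csum (l : seq elt) : R := \sum_(e <- l) e.1.1.2.
Definition ratio (e : elt) l : R := e.1.1.2 / (e.1.1.2 + csum l + 1).

Definition label (q : st) : bf_node R n V :=
  match q with
  | Sel [::] => @CoinC R n V (2^-1)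
  | Sel (e :: l) => if (0 < ratio e l) && (ratio e l < 1)
                    then @CoinC R n V (ratio e l) else @CoinC R n V (2^-1)
  | Tst w [::] => @Leaf R n V w
  | Tst _ ((i, _) :: _) => @CoinX R n V i
  end.

Definition delta (q : st) (b : bool) : st :=
  match q with
  | Sel [::] => Sel L0
  | Sel (e :: l) => if b then Tst e.1.1.1 (tests e) else Sel l
  | Tst w [::] => q
  | Tst w ((i, bb) :: T) => if b == bb then Tst w T else Sel L0
  end.

Definition tree (q : st) : bf_tree R n V := fun p => label (foldl delta q p).

Lemma tree_wf q : bf_wf (tree q).
Proof.
move=> p c; rewrite /tree; case: (foldl delta q p) => [[|e l]|w [|[i bb] T]] //=.
- by case=> <-; rewrite invr_gt0 ltr0n /= invf_lt1 ?ltr0n // ltr1n.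
- case: ifP => [/andP[h1 h2]|_]; first by case=> <-; rewrite h1 h2.
  by case=> <-; rewrite invr_gt0 ltr0n /= invf_lt1 ?ltr0n // ltr1n.
Qed.

Variables (x : 'I_n -> R) (v : V).
Hypothesis hx : forall i, 0 <= x i <= 1.

Definition F q := Lim x v (tree q).
Definition ind (w : V) : R := if w == v then 1 else 0.
Definition prodT (T : seq ('I_n * bool)) : R :=
  \prod_(ib <- T) (if ib.2 then x ib.1 else 1 - x ib.1).

Lemma FE q : F q = leafv (label q) v + edge_prob x (label q) true * F (delta q true)
        + edge_prob x (label q) false * F (delta q false).
Proof. have := @Lim_eq R n V x v (tree q) (wf_good (@tree_wf q) hx). exact. Qed.

Lemma F_Tst w T : F (Tst w T) = prodT T * ind w + (1 - prodT T) * F (Sel L0).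
Proof.
elim: T => [|[i bb] T IH].
  by rewrite FE /leafv /prodT big_nil /ind /=; case: (w == v); ring.
rewrite FE /prodT big_cons -/(prodT T) /leafv /=.
by case: bb; rewrite /= IH; ring.
Qed.

Lemma prodT_tests e : prodT (tests e) = bern_monomial e.1.2 e.2 x.
Proof.
rewrite /prodT /tests big_flatten big_map /bern_monomial; apply: eq_bigr => i _.
by rewrite big_cat !big_nseq /= !iter_mulr.
Qed.

Definition M e := prodT (tests e).

Lemma F_Sel l : (forall e, e \in l -> 0 < e.1.1.2) ->
  F (Sel l) * (csum l + 1) =
  \sum_(e <- l) e.1.1.2 * (M e * ind e.1.1.1 + (1 - M e) * F (Sel L0)) + F (Sel L0).
Proof.
elim: l => [|e l IH] hpos.
  by rewrite FE /leafv /csum !big_nil /=; ring.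
have ce : 0 < e.1.1.2 by apply: hpos; rewrite mem_head.
have C0 : 0 <= csum l.
  rewrite /csum big_seq; apply: sumr_ge0 => e' he'; apply/ltW/hpos.
  by rewrite in_cons he' orbT.
have d0 : 0 < e.1.1.2 + csum l + 1 by lra.
have r0 : 0 < ratio e l by rewrite /ratio divr_gt0.
have r1 : ratio e l < 1 by rewrite /ratio ltr_pdivrMr // mul1r; lra.
rewrite FE /= r0 r1 /= /leafv /= add0r F_Tst big_cons /csum big_cons -/(csum l).
have hl : forall e', e' \in l -> 0 < e'.1.1.2.
  by move=> e' he'; apply: hpos; rewrite in_cons he' orbT.
have IH' := IH hl.
rewrite -[RHS]addrA -IH'.
move: r0 r1; rewrite /ratio /M => _ _.
field; lra.
Qed.

End Auto.
Lemma F0_eq (R : realType) (n : nat) (V : finType) (L0 : seq (elt R n V)) x v :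
  (forall i, 0 <= x i <= 1) -> (forall e, e \in L0 -> 0 < e.1.1.2) ->
  F L0 x v (Sel L0) * (\sum_(e <- L0) e.1.1.2 * M x e) =
  \sum_(e <- L0) e.1.1.2 * M x e * ind R v e.1.1.1.
Proof.
move=> hx hp; have h := F_Sel L0 v hx hp.
have hs : \sum_(e <- L0) e.1.1.2 * (M x e * ind R v e.1.1.1 + (1 - M x e) * F L0 x v (Sel L0))
  = \sum_(e <- L0) e.1.1.2 * M x e * ind R v e.1.1.1
    + (csum L0 - \sum_(e <- L0) e.1.1.2 * M x e) * F L0 x v (Sel L0).
  by rewrite /csum mulrBl !mulr_suml -sumrB -big_split /=; apply: eq_bigr => e _; ring.
rewrite hs in h.
have -> : \sum_(e <- L0) e.1.1.2 * M x e * ind R v e.1.1.1 =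
  F L0 x v (Sel L0) * (csum L0 + 1) -
    (csum L0 - \sum_(e <- L0) e.1.1.2 * M x e) * F L0 x v (Sel L0) - F L0 x v (Sel L0).
  by rewrite h; ring.
ring.
Qed.

Lemma cvg_sum_list (R : realType) (I : Type) (r : seq I) (u : I -> nat -> R) (l : I -> R) :
  (forall i, u i @ \oo --> l i) ->
  (fun N => \sum_(i <- r) u i N) @ \oo --> \sum_(i <- r) l i.
Proof.
move=> h; elim: r => [|i r IH].
  under eq_cvg do rewrite big_nil. rewrite big_nil; exact: cvg_cst.
under eq_cvg do rewrite big_cons. rewrite big_cons; exact: cvgD.
Qed.
Theorem corollary2p6 (R : realType) (n : nat) (V : finType)
  (P : V -> ('I_n -> R) -> R) (S : set ('I_n -> R)) :
  (forall v, is_bernstein (P v)) ->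
  (forall x, S x -> forall i, 0 <= x i <= 1) ->
  (forall x, S x -> 0 < \sum_(v : V) P v x) ->
  exists t : bf_tree R n V,
    bf_wf t /\ terminates_as_on t S /\
    (forall x, S x -> forall v : V,
        outputs_with_prob t x v (P v x / \sum_(w : V) P w x)).
Proof.
move=> hB hcube hpos.
have [s hs] := choice hB.
pose L0 : seq (elt R n V) :=
  flatten [seq [seq (w, t.1.1, t.1.2, t.2) | t <- s w] | w <- index_enum V].
have hL0 : forall e, e \in L0 -> 0 < e.1.1.2.
  move=> e /flatten_mapP [w _ /mapP [t ht ->]] /=; exact: (hs w).1 t ht.
have key1 : forall x, \sum_(e <- L0) e.1.1.2 * M x e = \sum_(w : V) P w x.
  move=> x; rewrite big_flatten big_map; apply: eq_bigr => w _.
  rewrite (hs w).2 big_map; apply: eq_bigr => t _; by rewrite /M prodT_tests.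
have key2 : forall x v, \sum_(e <- L0) e.1.1.2 * M x e * ind R v e.1.1.1 = P v x.
  move=> x v; rewrite big_flatten big_map.
  rewrite (eq_bigr (fun w => ind R v w * P w x)); last first.
    move=> w _; rewrite (hs w).2 mulr_sumr big_map; apply: eq_bigr => t _.
    by rewrite /M prodT_tests /=; ring.
  rewrite (bigD1 v) //= /ind eqxx mul1r big1 ?addr0 // => w /negbTE ->.
  by rewrite mul0r.
have Fval : forall x, S x -> forall v,
    Lim x v (tree L0 (Sel L0)) = P v x / \sum_(w : V) P w x.
  move=> x Sx v.
  have := F0_eq v (hcube x Sx) hL0; rewrite key1 key2 /F => <-.
  by rewrite mulfK // gt_eqF // hpos.
exists (tree L0 (Sel L0)); split; first exact: tree_wf.
have hc : forall x, S x -> forall v,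
    out_prob_upto (tree L0 (Sel L0)) x v @ \oo --> P v x / \sum_(w : V) P w x.
  move=> x Sx v; rewrite -(Fval x Sx v).
  have g := wf_good (@tree_wf _ _ _ L0 (Sel L0)) (hcube x Sx).
  exact: (@out_cvg R n V x v _ g).
split; last exact: hc.
move=> x Sx.
under eq_cvg do rewrite halt_sum.
have E0 : 1 - \sum_(v : V) (P v x / \sum_(w : V) P w x) = 0.
  by rewrite -mulr_suml divff ?subrr // gt_eqF // hpos.
have hs2 := @cvg_sum_list R V (index_enum V) _ _ (hc x Sx).
have hh := cvgB (cvg_cst (1:R)) hs2.
rewrite E0 in hh; exact: hh.
Qed.
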